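(* Under the setting below, for any sequences generated by Algorithm BC (with arbitrary index selection) the following hold: (i) for every $k$, $\Phi^{\mathrm{FB}}_\Gamma(\bm x^{k+1})\le\Phi^{\mathrm{FB}}_\Gamma(\bm x^k)-\sum_{i\in I^{k+1}}\frac{\xi_i}{2\gamma_i}\|z_i^k-x_i^k\|^2$, where $\xi_i:=\frac{N-\gamma_iL_{f_i}}{N}>0$; (ii) $(\Phi^{\mathrm{FB}}_\Gamma(\bm x^k))_k$ is monotonically nonincreasing and converges to a finite value $\Phi_\star\ge\min\Phi$; (iii) $\Phi^{\mathrm{FB}}_\Gamma$ is constant, equal to $\Phi_\star$, on the set of accumulation points of $(\bm x^k)$; (iv) $\sum_k\|\bm x^{k+1}-\bm x^k\|^2<\infty$; (v) if $\Phi$ is coercive, then $(\bm x^k)$ and $(\bm z^k)$ are bounded.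
   Context: Setting: $N\ge1$, $n=\sum_{i=1}^N n_i$, $\bm x=(x_1,\dots,x_N)$ with $x_i\in\mathbb R^{n_i}$; $\Phi=F+G$ with $F(\bm x)=\frac1N\sum_i f_i(x_i)$, each $f_i:\mathbb R^{n_i}\to\mathbb R$ differentiable with $L_{f_i}$-Lipschitz gradient, $G:\mathbb R^n\to\mathbb R\cup\{+\infty\}$ proper lsc, $\arg\min\Phi\ne\emptyset$. $\gamma_i\in(0,N/L_{f_i})$, $\Gamma=\operatorname{blockdiag}(\gamma_1I_{n_1},\dots,\gamma_NI_{n_N})$, $\|x\|_V^2=\langle x,Vx\rangle$, $\operatorname{prox}_G^{V}(u)=\arg\min_w\{G(w)+\frac12\|w-u\|_V^2\}$, $\mathbf T(\bm x)=\operatorname{prox}_G^{\Gamma^{-1}}(\bm x-\Gamma\nabla F(\bm x))$. Forward-backward envelope: $\Phi^{\mathrm{FB}}_\Gamma(\bm x):=\inf_{\bm w}\{F(\bm x)+\langle\nabla F(\bm x),\bm w-\bm x\rangle+G(\bm w)+\frac12\|\bm w-\bm x\|^2_{\Gamma^{-1}}\}$. Algorithm BC: given $\bm x^0\in\mathbb R^n$, for $k=0,1,\dots$: pick $\bm z^k\in\mathbf T(\bm x^k)$; select a set of indices $I^{k+1}\subseteq[N]$; set $x_i^{k+1}=z_i^k$ for $i\in I^{k+1}$ and $x_i^{k+1}=x_i^k$ for $i\notin I^{k+1}$. *)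

(* Defs.v *)
From Stdlib Require Import Reals ClassicalEpsilon.
From mathcomp Require Import all_boot.
Set Implicit Arguments. Unset Strict Implicit. Unset Printing Implicit Defensive.

Local Open Scope R_scope.

Definition rsum (m : nat) (F : 'I_m -> R) : R := \big[Rplus/0]_(j < m) F j.

Definition vec (m : nat) := 'I_m -> R.
Definition ip (m : nat) (u v : vec m) : R := rsum (fun j => u j * v j).
Definition nsq (m : nat) (u : vec m) : R := ip u u.
Definition vsub (m : nat) (u v : vec m) : vec m := fun j => u j - v j.
Definition vscale (m : nat) (a : R) (u : vec m) : vec m := fun j => a * u j.
Definition vnorm (m : nat) (u : vec m) : R := sqrt (nsq u).

Definition bvec (N : nat) (n : 'I_N -> nat) := forall i : 'I_N, vec (n i).
Definition bsub (N : nat) (n : 'I_N -> nat) (x y : bvec n) : bvec n :=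
  fun i => vsub (x i) (y i).
Definition bnsq (N : nat) (n : 'I_N -> nat) (x : bvec n) : R :=
  rsum (fun i => nsq (x i)).
Definition bnorm (N : nat) (n : 'I_N -> nat) (x : bvec n) : R := sqrt (bnsq x).

Definition is_gradient (m : nat) (f : vec m -> R) (g : vec m -> vec m) : Prop :=
  forall x eps, 0 < eps -> exists delta, 0 < delta /\
    forall y, vnorm (vsub y x) < delta ->
      Rabs (f y - f x - ip (g x) (vsub y x)) <= eps * vnorm (vsub y x).

Definition lipschitz (m : nat) (g : vec m -> vec m) (L : R) : Prop :=
  forall x y, vnorm (vsub (g x) (g y)) <= L * vnorm (vsub x y).

(* extended reals R U {+oo}: None = +oo *)
Definition ext_add (r : R) (v : option R) : option R := option_map (Rplus r) v.
Definition ext_le (u v : option R) : Prop :=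
  match u, v with
  | _, None => True
  | None, Some _ => False
  | Some a, Some b => a <= b
  end.
Definition ext_gt (a : R) (v : option R) : Prop :=
  match v with None => True | Some b => a < b end.

Definition proper_fun (N : nat) (n : 'I_N -> nat) (G : bvec n -> option R) : Prop :=
  exists x, G x <> None.
Definition lsc (N : nat) (n : 'I_N -> nat) (G : bvec n -> option R) : Prop :=
  forall x a, ext_gt a (G x) -> exists delta, 0 < delta /\
    forall y, bnorm (bsub y x) < delta -> ext_gt a (G y).

Definition Fval (N : nat) (n : 'I_N -> nat) (f : forall i, vec (n i) -> R)
  (x : bvec n) : R := / INR N * rsum (fun i => f i (x i)).

Definition Phi (N : nat) (n : 'I_N -> nat) (f : forall i, vec (n i) -> R)
  (G : bvec n -> option R) (x : bvec n) : option R := ext_add (Fval f x) (G x).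

(* z in T(x) = prox_G^{Gamma^-1}(x - Gamma grad F(x)),
   block i of grad F(x) is (1/N) grad f_i(x_i) *)
Definition prox_obj (N : nat) (n : 'I_N -> nat)
  (gf : forall i, vec (n i) -> vec (n i)) (gamma : 'I_N -> R)
  (G : bvec n -> option R) (x w : bvec n) : option R :=
  ext_add (/ 2 * rsum (fun i => / gamma i *
      nsq (vsub (w i) (vsub (x i) (vscale (gamma i / INR N) (gf i (x i)))))))
    (G w).
Definition in_T (N : nat) (n : 'I_N -> nat)
  (gf : forall i, vec (n i) -> vec (n i)) (gamma : 'I_N -> R)
  (G : bvec n -> option R) (x z : bvec n) : Prop :=
  prox_obj gf gamma G x z <> None /\
  forall w, ext_le (prox_obj gf gamma G x z) (prox_obj gf gamma G x w).

(* infimum of a set of reals (classical choice; in the setting it always exists) *)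
Definition is_glb (P : R -> Prop) (m : R) : Prop :=
  (forall v, P v -> m <= v) /\ (forall b, (forall v, P v -> b <= v) -> b <= m).
Definition Rinf (P : R -> Prop) : R := epsilon (inhabits 0) (is_glb P).

Definition fbe_obj (N : nat) (n : 'I_N -> nat) (f : forall i, vec (n i) -> R)
  (gf : forall i, vec (n i) -> vec (n i)) (gamma : 'I_N -> R)
  (G : bvec n -> option R) (x w : bvec n) : option R :=
  ext_add (Fval f x
           + rsum (fun i => ip (vscale (/ INR N) (gf i (x i))) (vsub (w i) (x i)))
           + / 2 * rsum (fun i => / gamma i * nsq (vsub (w i) (x i))))
          (G w).
Definition FBE (N : nat) (n : 'I_N -> nat) (f : forall i, vec (n i) -> R)
  (gf : forall i, vec (n i) -> vec (n i)) (gamma : 'I_N -> R)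
  (G : bvec n -> option R) (x : bvec n) : R :=
  Rinf (fun v => exists w, fbe_obj f gf gamma G x w = Some v).

Definition cluster_point (N : nat) (n : 'I_N -> nat) (x : nat -> bvec n)
  (xb : bvec n) : Prop :=
  forall eps K, 0 < eps -> exists k, (K <= k)%nat /\ bnorm (bsub (x k) xb) < eps.

Definition coercive (N : nat) (n : 'I_N -> nat) (P : bvec n -> option R) : Prop :=
  forall M, exists r, forall x, r < bnorm x -> ext_gt M (P x).

(* Main.v *)
Require Import Defs.
From Stdlib Require Import Reals Lra Psatz ClassicalEpsilon FunctionalExtensionality Classical.
From mathcomp Require Import all_boot.
From HB Require Import structures.

Set Implicit Arguments. Unset Strict Implicit.
Local Open Scope R_scope.

Lemma Rplus_assoc' : associative Rplus. Proof. move=> a b c; ring. Qed.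
HB.instance Definition _ := Monoid.isComLaw.Build R 0 Rplus Rplus_assoc' Rplus_comm Rplus_0_l.

Section RS.
Variable m : nat.
Implicit Types F G : 'I_m -> R.

Lemma rsum_ext F G : (forall j, F j = G j) -> rsum F = rsum G.
Proof. move=> h; rewrite /rsum; apply: eq_bigr => j _; exact: h. Qed.

Lemma rsum_add F G : rsum (fun j => F j + G j) = rsum F + rsum G.
Proof. by rewrite /rsum big_split. Qed.

Lemma rsum_scal c F : rsum (fun j => c * F j) = c * rsum F.
Proof.
rewrite /rsum; apply: (big_rec2 (fun a b => a = c * b)); first by rewrite Rmult_0_r.
move=> j a b _ ->; ring.
Qed.

Lemma rsum_opp F : rsum (fun j => - F j) = - rsum F.
Proof.
rewrite (rsum_ext (G:=fun j => -1 * F j)); last by move=> j; ring.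
rewrite rsum_scal; ring.
Qed.

Lemma rsum_sub F G : rsum (fun j => F j - G j) = rsum F - rsum G.
Proof. rewrite /Rminus -rsum_opp -rsum_add; done. Qed.

Lemma rsum_le F G : (forall j, F j <= G j) -> rsum F <= rsum G.
Proof.
move=> h; rewrite /rsum; apply: (big_rec2 (fun a b => a <= b)); first lra.
move=> j a b _ hab; have := h j; lra.
Qed.

Lemma rsum_ge0 F : (forall j, 0 <= F j) -> 0 <= rsum F.
Proof.
move=> h; rewrite /rsum; apply: (big_rec (fun a => 0 <= a)); first lra.
move=> j a _ ha; have := h j; lra.
Qed.

Lemma rsum_abs F : Rabs (rsum F) <= rsum (fun j => Rabs (F j)).
Proof.
rewrite /rsum; apply: (big_rec2 (fun a b => Rabs a <= b)); first by rewrite Rabs_R0; lra.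
move=> j a b _ hab; have := Rabs_triang (F j) a; lra.
Qed.

Lemma rsum_term F j : (forall j, 0 <= F j) -> F j <= rsum F.
Proof.
move=> h; rewrite /rsum (bigD1 j) //=.
set S := (X in _ + X).
have : 0 <= S.
  rewrite /S; apply: (big_rec (fun a => 0 <= a)); first lra.
  move=> i a _ ha; have := h i; lra.
lra.
Qed.

Lemma rsum0 : rsum (fun _ : 'I_m => 0) = 0.
Proof. rewrite /rsum; apply: (big_rec (fun a => a = 0)) => // *; subst; ring. Qed.

End RS.

Set Implicit Arguments. Unset Strict Implicit.
Local Open Scope R_scope.

Section V.
Variable m : nat.
Implicit Types u v w : vec m.

Lemma nsq_ge0 u : 0 <= nsq u.
Proof. apply: rsum_ge0 => j; nra. Qed.

Lemma vnorm_ge0 u : 0 <= vnorm u.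
Proof. exact: sqrt_pos. Qed.

Lemma vnorm_sq u : vnorm u * vnorm u = nsq u.
Proof. rewrite /vnorm sqrt_sqrt //; exact: nsq_ge0. Qed.

Lemma ip_comm u v : ip u v = ip v u.
Proof. apply: rsum_ext => j; ring. Qed.

Lemma ip_scale_r c u v : ip u (vscale c v) = c * ip u v.
Proof. rewrite /ip -rsum_scal; apply: rsum_ext => j; rewrite /vscale; ring. Qed.

Lemma nsq_scale c u : nsq (vscale c u) = c * c * nsq u.
Proof. rewrite /nsq /ip -rsum_scal; apply: rsum_ext => j; rewrite /vscale; ring. Qed.

Lemma vnorm_scale c u : vnorm (vscale c u) = Rabs c * vnorm u.
Proof.
rewrite /vnorm nsq_scale sqrt_mult_alt; last nra.
by rewrite sqrt_Rsqr_abs.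
Qed.

Lemma ip_sub_l u v w : ip (vsub u v) w = ip u w - ip v w.
Proof. rewrite /ip -rsum_sub; apply: rsum_ext => j; rewrite /vsub; ring. Qed.

Lemma nsq_zero_all u : nsq u = 0 -> forall j, u j = 0.
Proof.
move=> h j.
have := @rsum_term m (fun j => u j * u j) j (fun j => ltac:(nra)).
rewrite -/(ip u u) -/(nsq u) h => hj; nra.
Qed.

Lemma ip_sq_le u v : ip u v * ip u v <= nsq u * nsq v.
Proof.
have hv := nsq_ge0 v.
case: (Req_dec (nsq v) 0) => h0.
  have hz := nsq_zero_all h0.
  have -> : ip u v = 0.
    rewrite /ip -(rsum0 m); apply: rsum_ext => j; rewrite hz; ring.
  rewrite h0; lra.
set t := - ip u v / nsq v.
have : 0 <= nsq (fun j => u j + t * v j) by exact: nsq_ge0.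
have -> : nsq (fun j => u j + t * v j) = nsq u + 2 * t * ip u v + t * t * nsq v.
  rewrite /nsq /ip -!rsum_scal -!rsum_add; apply: rsum_ext => j; ring.
rewrite /t => h.
have hp : 0 < nsq v by lra.
have : 0 <= (nsq u + 2 * (- ip u v / nsq v) * ip u v +
      - ip u v / nsq v * (- ip u v / nsq v) * nsq v) * nsq v by nra.
have -> : (nsq u + 2 * (- ip u v / nsq v) * ip u v +
      - ip u v / nsq v * (- ip u v / nsq v) * nsq v) * nsq v
   = nsq u * nsq v - ip u v * ip u v by field; lra.
lra.
Qed.

Lemma cauchy_schwarz u v : Rabs (ip u v) <= vnorm u * vnorm v.
Proof.
rewrite /vnorm -sqrt_mult; try exact: nsq_ge0.
rewrite -sqrt_Rsqr_abs; apply: sqrt_le_1_alt; rewrite /Rsqr; exact: ip_sq_le.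
Qed.

Lemma ip_le u v : ip u v <= vnorm u * vnorm v.
Proof. have := cauchy_schwarz u v; have := Rle_abs (ip u v); lra. Qed.

End V.

Definition xline m (x d : vec m) (t : R) : vec m := fun j => x j + t * d j.

Lemma quad_deriv A a t :
  derivable_pt_lim (fun t => t * A + a * t * t / 2) t (A + a * t).
Proof.
move=> eps he.
have hp : 0 < eps / (Rabs a / 2 + 1).
  apply: Rdiv_lt_0_compat => //; have := Rabs_pos a; lra.
exists (mkposreal _ hp) => h hh /= hlt.
have -> : ((t + h) * A + a * (t + h) * (t + h) / 2 - (t * A + a * t * t / 2)) / h - (A + a * t)
   = a / 2 * h by field.
rewrite Rabs_mult.
have -> : Rabs (a / 2) = Rabs a / 2.
  by rewrite /Rdiv Rabs_mult Rabs_inv (Rabs_right 2); lra.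
have ha := Rabs_pos a; have hh' := Rabs_pos h.
have : Rabs h * (Rabs a / 2 + 1) < eps.
  by move: hlt; rewrite -(Rmult_1_r (Rabs h)); move/(Rmult_lt_compat_r (Rabs a / 2 + 1)); rewrite Rmult_1_r /Rdiv Rmult_assoc Rinv_l; lra.
nra.
Qed.

Set Implicit Arguments. Unset Strict Implicit.
Local Open Scope R_scope.

Lemma line_deriv m (f : vec m -> R) g x d t :
  is_gradient f g ->
  derivable_pt_lim (fun t => f (xline x d t)) t (ip (g (xline x d t)) d).
Proof.
move=> hg eps he.
set p := xline x d t.
have hnd := vnorm_ge0 d.
have he' : 0 < eps / (vnorm d + 1) by apply: Rdiv_lt_0_compat; lra.
have [delta [hd hdel]] := hg p _ he'.
have hdp : 0 < delta / (vnorm d + 1) by apply: Rdiv_lt_0_compat; lra.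
exists (mkposreal _ hdp) => h hh /= hlt.
have ev : vsub (xline x d (t + h)) p = vscale h d.
  apply: functional_extensionality => j; rewrite /vsub /xline /vscale /p /xline; ring.
have hah : 0 < Rabs h by apply: Rabs_pos_lt.
have hlt2 : Rabs h * (vnorm d + 1) < delta.
  move: hlt; rewrite /Rdiv => hlt.
  have := Rmult_lt_compat_r (vnorm d + 1) _ _ ltac:(lra) hlt.
  by rewrite Rmult_assoc Rinv_l; lra.
have := hdel (xline x d (t + h)).
rewrite ev vnorm_scale ip_scale_r => H.
have H2 := H ltac:(nra).
have -> : (f (xline x d (t + h)) - f (xline x d t)) / h - ip (g p) d
   = (f (xline x d (t + h)) - f p - h * ip (g p) d) / h.
  by rewrite /p; field.
rewrite /Rdiv Rabs_mult Rabs_inv.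
apply: (Rle_lt_trans _ (eps / (vnorm d + 1) * (Rabs h * vnorm d) * / Rabs h)).
  apply: Rmult_le_compat_r; last exact: H2.
  by apply: Rlt_le; apply: Rinv_0_lt_compat.
have -> : eps / (vnorm d + 1) * (Rabs h * vnorm d) * / Rabs h
   = eps * (vnorm d / (vnorm d + 1)) by field; lra.
have : vnorm d / (vnorm d + 1) < 1.
  apply/(Rmult_lt_reg_r (vnorm d + 1)); first lra.
  rewrite /Rdiv Rmult_assoc Rinv_l; lra.
nra.
Qed.

Lemma descent_aux m (f : vec m -> R) g x y a :
  is_gradient f g ->
  exists c, 0 < c < 1 /\
   f y - f x - ip (g x) (vsub y x) - a / 2
   = ip (vsub (g (xline x (vsub y x) c)) (g x)) (vsub y x) - a * c.
Proof.
move=> hg; set d := vsub y x.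
set psi := fun t => f (xline x d t) - (t * ip (g x) d + a * t * t / 2).
have hd : forall c, 0 <= c <= 1 -> derivable_pt_lim psi c
      (ip (g (xline x d c)) d - (ip (g x) d + a * c)).
  move=> c _; apply: derivable_pt_lim_minus; first exact: line_deriv.
  exact: quad_deriv.
have [c [hc hc01]] := MVT_cor2 psi _ 0 1 Rlt_0_1 hd.
exists c; split => //.
have e1 : xline x d 1 = y.
  by apply: functional_extensionality => j; rewrite /xline /d /vsub; ring.
have e0 : xline x d 0 = x.
  by apply: functional_extensionality => j; rewrite /xline; ring.
move: hc; rewrite /psi e1 e0 ip_sub_l => hc.
lra.
Qed.

Lemma descent m (f : vec m -> R) g L x y :
  is_gradient f g -> lipschitz g L -> 0 <= L ->
  Rabs (f y - f x - ip (g x) (vsub y x)) <= L / 2 * nsq (vsub y x).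
Proof.
move=> hg hL hL0; set d := vsub y x.
have key : forall c, 0 < c < 1 ->
   Rabs (ip (vsub (g (xline x d c)) (g x)) d) <= L * c * nsq d.
  move=> c hc.
  apply: (Rle_trans _ _ _ (cauchy_schwarz _ _)).
  have hl := hL (xline x d c) x.
  have ev : vsub (xline x d c) x = vscale c d.
    by apply: functional_extensionality => j; rewrite /vsub /xline /vscale; ring.
  rewrite ev vnorm_scale Rabs_right in hl; last lra.
  rewrite -vnorm_sq.
  have := vnorm_ge0 d; have := vnorm_ge0 (vsub (g (xline x d c)) (g x)).
  nra.
have [c1 [hc1 e1]] := @descent_aux m f g x y (L * nsq d) hg.
have [c2 [hc2 e2]] := @descent_aux m f g x y (- (L * nsq d)) hg.
have k1 := key c1 hc1; have k2 := key c2 hc2.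
rewrite -/d in e1 e2.
have hn := nsq_ge0 d.
set I1 := ip (vsub (g (xline x d c1)) (g x)) d in e1 k1.
set I2 := ip (vsub (g (xline x d c2)) (g x)) d in e2 k2.
have a1 := Rle_abs I1; have a2 := Rle_abs (- I2); rewrite Rabs_Ropp in a2.
apply: Rabs_le; split; nra.
Qed.


Unset Implicit Arguments. Set Strict Implicit.
Local Open Scope R_scope.

Lemma ip_scale_l m c (u v : vec m) : ip (vscale c u) v = c * ip u v.
Proof. rewrite /ip -rsum_scal; apply: rsum_ext => j; rewrite /vscale; ring. Qed.

Lemma nsq_vsub0 m (u : vec m) : nsq (vsub u u) = 0.
Proof. rewrite /nsq /ip -(rsum0 m); apply: rsum_ext => j; rewrite /vsub; ring. Qed.

Lemma ip_vsub0 m (g u : vec m) : ip g (vsub u u) = 0.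
Proof. rewrite /ip -(rsum0 m); apply: rsum_ext => j; rewrite /vsub; ring. Qed.

Lemma Rinf_glb (P : R -> Prop) m : is_glb P m -> Rinf P = m.
Proof.
move=> h; have h2 : is_glb P (Rinf P).
  by rewrite /Rinf; apply: epsilon_spec; exists m.
case: h => h1 h1'; case: h2 => h2 h2'.
apply: Rle_antisym; [apply: h1' | apply: h2']; assumption.
Qed.

Section Blocks.
Variable N : nat.
Variable n : 'I_N -> nat.
Variable f : forall i, vec (n i) -> R.
Variable gf : forall i, vec (n i) -> vec (n i).
Variables L gamma : 'I_N -> R.
Variable G : bvec n -> option R.
Hypothesis hN : (1 <= N)%nat.
Hypothesis hgrad : forall i : 'I_N, is_gradient (f i) (gf i).
Hypothesis hL : forall i, 0 < L i.
Hypothesis hlip : forall i : 'I_N, lipschitz (gf i) (L i).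
Hypothesis hgam : forall i, 0 < gamma i /\ gamma i < INR N / L i.

Lemma INR_N_pos : 0 < INR N.
Proof. apply: lt_0_INR; apply/ltP; exact: hN. Qed.

Definition blk (x w : bvec n) (i : 'I_N) : R :=
  / INR N * f i (x i) + ip (vscale (/ INR N) (gf i (x i))) (vsub (w i) (x i))
  + / 2 * (/ gamma i * nsq (vsub (w i) (x i))).
Definition Hval x w := rsum (blk x w).
Definition Pval (x w : bvec n) := / 2 * rsum (fun i => / gamma i *
      nsq (vsub (w i) (vsub (x i) (vscale (gamma i / INR N) (gf i (x i)))))).
Definition Dval (x : bvec n) := Fval f x
   - / 2 * rsum (fun i => / gamma i * nsq (vscale (gamma i / INR N) (gf i (x i)))).
Definition cc (i : 'I_N) := (INR N - gamma i * L i) / INR N / (2 * gamma i).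

Lemma cc_pos i : 0 < cc i.
Proof.
have hn := INR_N_pos; have [g1 g2] := hgam i; have := hL i => hl.
rewrite /cc; apply: Rdiv_lt_0_compat; last lra.
apply: Rdiv_lt_0_compat => //.
have : gamma i * L i < INR N / L i * L i by apply: Rmult_lt_compat_r.
rewrite /Rdiv Rmult_assoc Rinv_l; lra.
Qed.

Lemma fbe_H x w : fbe_obj f gf gamma G x w = ext_add (Hval x w) (G w).
Proof.
rewrite /fbe_obj /Hval /blk !rsum_add !rsum_scal /Fval -!rsum_scal.
done.
Qed.

Lemma prox_P x w : prox_obj gf gamma G x w = ext_add (Pval x w) (G w).
Proof. by []. Qed.

Lemma H_P x w : Hval x w = Pval x w + Dval x.
Proof.
have hn := INR_N_pos.
have blkid : forall i, blk x w i = / 2 * (/ gamma i *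
      nsq (vsub (w i) (vsub (x i) (vscale (gamma i / INR N) (gf i (x i))))))
   + (/ INR N * f i (x i) - / 2 * (/ gamma i * nsq (vscale (gamma i / INR N) (gf i (x i))))).
  move=> i; have [g1 _] := hgam i.
  rewrite /blk /nsq /ip -!rsum_scal.
  have e : forall a b c d e : R, a + b + c = d + (a - e) <-> b + c + e - d = 0.
    move=> *; split => *; lra.
  apply/e; rewrite -!rsum_add -rsum_sub -(rsum0 (n i)); apply: rsum_ext => j.
  rewrite /vsub /vscale; field; lra.
rewrite /Hval (rsum_ext blkid) rsum_add /Pval /Dval /Fval rsum_sub -!rsum_scal //.
Qed.

Lemma blk_lb x w i : / INR N * f i (w i) + cc i * nsq (vsub (w i) (x i)) <= blk x w i.
Proof.
have hn := INR_N_pos; have [g1 g2] := hgam i; have hl := hL i.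
have hd := descent (x i) (w i) (hgrad i) (hlip i) (Rlt_le _ _ hl).
have hd2 := Rle_abs (f i (w i) - f i (x i) - ip (gf i (x i)) (vsub (w i) (x i))).
rewrite /blk ip_scale_l /cc.
set A := nsq _ in hd hd2 *. set B := ip _ _ in hd hd2 *.
have hA : 0 <= A := nsq_ge0 _.
have -> : (INR N - gamma i * L i) / INR N / (2 * gamma i) * A
   = / INR N * (- (L i / 2 * A)) + / 2 * (/ gamma i * A) by field; lra.
have hiN : 0 < / INR N by apply: Rinv_0_lt_compat.
have : / INR N * (f i (w i) - f i (x i) - B) <= / INR N * (L i / 2 * A).
  apply: Rmult_le_compat_l; lra.
lra.
Qed.

Lemma blk_same x w i : x i = w i -> blk x w i = / INR N * f i (w i).
Proof. move=> h; rewrite /blk h nsq_vsub0 ip_vsub0; ring. Qed.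

Lemma abs_bounds u v : Rabs u <= v -> - v <= u <= v.
Proof. move=> h; have := Rle_abs u; have := Rle_abs (- u); rewrite Rabs_Ropp; lra. Qed.
Lemma blk_diff_id (x xb w : bvec n) i :
  let a := vsub (x i) (xb i) in let b := vsub (w i) (xb i) in
  let dg := vsub (gf i (x i)) (gf i (xb i)) in
  blk x w i - blk xb w i
  = / INR N * (f i (x i) - f i (xb i) - ip (gf i (xb i)) a)
    + / INR N * (ip dg b - ip dg a) + / 2 * / gamma i * (nsq a - 2 * ip a b).
Proof.
move=> a b dg.
rewrite /blk !ip_scale_l.
set F1 := f i (x i); set F0 := f i (xb i).
suff E : / INR N * ip (gf i (x i)) (vsub (w i) (x i))
   + / 2 * (/ gamma i * nsq (vsub (w i) (x i)))
   - / INR N * ip (gf i (xb i)) (vsub (w i) (xb i))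
   - / 2 * (/ gamma i * nsq (vsub (w i) (xb i)))
   + / INR N * ip (gf i (xb i)) a
   - / INR N * ip dg b + / INR N * ip dg a
   - / 2 * (/ gamma i * nsq a) + / 2 * (/ gamma i * (2 * ip a b)) = 0.
  lra.
rewrite /a /b /dg /nsq /ip -!rsum_scal.
do 6 rewrite -?rsum_add -?rsum_sub. rewrite -(rsum0 (n i)). apply: rsum_ext => j; rewrite /vsub; ring.
Qed.


Lemma abs_comb c d X Y BX BY : 0 <= c -> 0 <= d -> Rabs X <= BX -> Rabs Y <= BY ->
  Rabs (c * X + d * Y) <= c * BX + d * BY.
Proof.
move=> hc hd hX hY.
apply: (Rle_trans _ _ _ (Rabs_triang _ _)); rewrite !Rabs_mult (Rabs_right c) ?(Rabs_right d); try lra.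
apply: Rplus_le_compat; apply: Rmult_le_compat_l => //.
Qed.

Lemma blk_diff_bound (x xb w : bvec n) i :
  Rabs (blk x w i - blk xb w i) <=
  / INR N * (L i * (3 / 2 * vnorm (vsub (x i) (xb i)) * vnorm (vsub (x i) (xb i))
              + vnorm (vsub (x i) (xb i)) * vnorm (vsub (w i) (xb i))))
  + / 2 * / gamma i * (vnorm (vsub (x i) (xb i)) * vnorm (vsub (x i) (xb i))
              + 2 * vnorm (vsub (x i) (xb i)) * vnorm (vsub (w i) (xb i))).
Proof.
rewrite blk_diff_id.
set a := vsub (x i) (xb i); set b := vsub (w i) (xb i).
set dg := vsub (gf i (x i)) (gf i (xb i)).
set s := vnorm a; set R0 := vnorm b.
have hn := INR_N_pos; have [g1 _] := hgam i; have hl := hL i.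
have hs : 0 <= s := vnorm_ge0 _. have hR : 0 <= R0 := vnorm_ge0 _.
have e1 := descent (xb i) (x i) (hgrad i) (hlip i) (Rlt_le _ _ hl).
rewrite -/a -(vnorm_sq a) -/s in e1.
have hdg : vnorm dg <= L i * s := hlip i (x i) (xb i).
have hdg0 := vnorm_ge0 dg.
have c1 := cauchy_schwarz dg b; have c2 := cauchy_schwarz dg a; have c3 := cauchy_schwarz a b.
rewrite -/s -/R0 in c1 c2 c3.
rewrite -(vnorm_sq a) -/s.
rewrite -Rmult_plus_distr_l.
apply: abs_comb.
- by apply: Rlt_le; apply: Rinv_0_lt_compat.
- have := Rinv_0_lt_compat _ g1; nra.
- apply: (Rle_trans _ _ _ (Rabs_triang _ _)).
  have : Rabs (ip dg b - ip dg a) <= L i * s * R0 + L i * s * s.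
    apply: (Rle_trans _ _ _ (Rabs_triang _ _)); rewrite Rabs_Ropp.
    have : vnorm dg * R0 <= L i * s * R0 by apply: Rmult_le_compat_r.
    have : vnorm dg * s <= L i * s * s by apply: Rmult_le_compat_r.
    lra.
  lra.
- apply: (Rle_trans _ _ _ (Rabs_triang _ _)); rewrite Rabs_Ropp (Rabs_right (s * s)); last nra. rewrite Rabs_mult.
  rewrite (Rabs_right 2); lra.
Qed.

Lemma nsq_le_bnsq (y : bvec n) i : nsq (y i) <= bnsq y.
Proof. apply: (@rsum_term N (fun i => nsq (y i))) => j; exact: nsq_ge0. Qed.

Lemma bnsq_ge0 (y : bvec n) : 0 <= bnsq y.
Proof. apply: rsum_ge0 => j; exact: nsq_ge0. Qed.

Lemma vnorm_le_bnorm (y : bvec n) i : vnorm (y i) <= bnorm y.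
Proof. apply: sqrt_le_1_alt; exact: nsq_le_bnsq. Qed.

Lemma Hval_cont xb R0 eps : 0 <= R0 -> 0 < eps -> exists d, 0 < d /\
  forall x w, bnorm (bsub x xb) < d -> bnsq (bsub w xb) <= R0 ->
  Rabs (Hval x w - Hval xb w) <= eps.
Proof.
move=> hR0 he.
set rho := sqrt R0.
have hrho : 0 <= rho := sqrt_pos _.
have hn := INR_N_pos.
set K := fun i => / INR N * L i * (2 + rho) + / gamma i * (1 + rho).
have hK : forall i, 0 <= K i.
  move=> i; have [g1 _] := hgam i; have := hL i => hl.
  have h1 := Rinv_0_lt_compat _ g1; have h2 := Rinv_0_lt_compat _ hn.
  rewrite /K.
  have : 0 <= / INR N * L i by nra.
  nra.
set Kt := rsum K.
have hKt : 0 <= Kt by apply: rsum_ge0.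
set t := eps / (2 * Kt + 1).
have ht : 0 < t by apply: Rdiv_lt_0_compat; lra.
have htt : t * (2 * Kt + 1) = eps by rewrite /t; field; lra.
exists (Rmin 1 t); split; first by apply: Rmin_pos; lra.
move=> x w hx hw.
set S := bnorm (bsub x xb) in hx.
have hS : 0 <= S := sqrt_pos _.
have hS1 : S < 1 by have := Rmin_l 1 t; lra.
have hSt : S < t by have := Rmin_r 1 t; lra.
have bi : forall i, Rabs (blk x w i - blk xb w i) <= K i * (S + S * S).
  move=> i; apply: (Rle_trans _ _ _ (blk_diff_bound x xb w i)).
  set s := vnorm (vsub (x i) (xb i)); set R1 := vnorm (vsub (w i) (xb i)).
  have hs : 0 <= s := vnorm_ge0 _. have hR1 : 0 <= R1 := vnorm_ge0 _.
  have hsS : s <= S := vnorm_le_bnorm (bsub x xb) i.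
  have hR1r : R1 <= rho.
    apply: (Rle_trans _ (bnorm (bsub w xb))); first exact: (vnorm_le_bnorm (bsub w xb) i).
    by apply: sqrt_le_1_alt.
  have [g1 _] := hgam i; have hl := hL i.
  have hiN := Rinv_0_lt_compat _ hn; have hig := Rinv_0_lt_compat _ g1.
  have X1 : 3 / 2 * s * s + s * R1 <= (2 + rho) * (S + S * S) by nra.
  have X2 : s * s + 2 * s * R1 <= 2 * (1 + rho) * (S + S * S) by nra.
  have P1 : / INR N * (L i * (3 / 2 * s * s + s * R1)) <= / INR N * (L i * ((2 + rho) * (S + S * S))).
    by apply: Rmult_le_compat_l; [lra | apply: Rmult_le_compat_l; lra].
  have P2 : / 2 * / gamma i * (s * s + 2 * s * R1) <= / 2 * / gamma i * (2 * (1 + rho) * (S + S * S)).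
    by apply: Rmult_le_compat_l; [nra | lra].
  apply: (Rle_trans _ _ _ (Rplus_le_compat _ _ _ _ P1 P2)).
  right; rewrite /K; field; lra.
rewrite /Hval -rsum_sub.
apply: (Rle_trans _ _ _ (rsum_abs _)).
apply: (Rle_trans _ (rsum (fun i => K i * (S + S * S)))); first exact: rsum_le.
rewrite (rsum_ext (G := fun i => (S + S * S) * K i)); last by move=> i; ring.
rewrite rsum_scal -/Kt.
have a1 : S * S <= S by nra.
have a2 : (S + S * S) * Kt <= 2 * S * Kt by nra.
have a3 : 2 * S * Kt <= 2 * t * Kt by nra.
nra.
Qed.

Lemma FBE_min x0 z0 : in_T gf gamma G x0 z0 -> exists gz, G z0 = Some gz /\
  FBE f gf gamma G x0 = Hval x0 z0 + gz /\
  forall w gw, G w = Some gw -> Hval x0 z0 + gz <= Hval x0 w + gw.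
Proof.
case=> hne hle; rewrite prox_P in hne.
case eq: (G z0) hne => [gz|] hne; last by [].
have mn : forall w gw, G w = Some gw -> Hval x0 z0 + gz <= Hval x0 w + gw.
  move=> w gw hw; have := hle w; rewrite !prox_P eq hw /= !(H_P x0) => h; lra.
exists gz; split => //; split => //.
rewrite /FBE; apply: Rinf_glb; split.
- move=> v [w hw]; rewrite fbe_H in hw.
  case eqw: (G w) hw => [gw|] hw; last by [].
  case: hw => <-; exact: mn.
- move=> b hb; apply: hb; exists z0; by rewrite fbe_H eq.
Qed.

Variable xs : bvec n.
Variable r0 : R.
Hypothesis hxs : Phi f G xs = Some r0.
Hypothesis hmin : forall y, ext_le (Phi f G xs) (Phi f G y).

Lemma Phi_lb w gw : G w = Some gw -> r0 <= Fval f w + gw.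
Proof. move=> hw; have := hmin w; by rewrite hxs /Phi hw. Qed.

Definition cm := / rsum (fun i => / cc i).

Lemma cm_facts : 0 < cm /\ forall i, cm <= cc i.
Proof.
have hpos : forall i, 0 < / cc i by move=> i; apply: Rinv_0_lt_compat; exact: cc_pos.
have hle : forall i, / cc i <= rsum (fun i => / cc i).
  move=> i; apply: (@rsum_term N (fun i => / cc i)) => j; exact: Rlt_le.
have hs : 0 < rsum (fun i => / cc i).
  exact: (Rlt_le_trans _ _ _ (hpos (Ordinal hN)) (hle (Ordinal hN))).
split; first by apply: Rinv_0_lt_compat.
move=> i; rewrite /cm -(Rinv_inv (cc i)).
apply: Rinv_le_contravar => //.
Qed.

Lemma HLB x0 w gw : G w = Some gw ->
  r0 + rsum (fun i => cc i * nsq (vsub (w i) (x0 i))) <= Hval x0 w + gw.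
Proof.
move=> hw; have := Phi_lb w gw hw.
have : rsum (fun i => / INR N * f i (w i)) + rsum (fun i => cc i * nsq (vsub (w i) (x0 i)))
    <= Hval x0 w.
  rewrite -rsum_add; apply: rsum_le => i; exact: blk_lb.
rewrite /Fval rsum_scal; lra.
Qed.

Lemma HLB2 x0 w gw : G w = Some gw -> r0 + cm * bnsq (bsub w x0) <= Hval x0 w + gw.
Proof.
move=> hw; have := HLB x0 w gw hw.
have : cm * bnsq (bsub w x0) <= rsum (fun i => cc i * nsq (vsub (w i) (x0 i))).
  rewrite /bnsq -rsum_scal; apply: rsum_le => i.
  have [_ h] := cm_facts; have := nsq_ge0 (vsub (w i) (x0 i)); have := h i.
  rewrite /bsub; nra.
lra.
Qed.

Lemma FH x0 w : Fval f w <= Hval x0 w.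
Proof.
have : rsum (fun i => / INR N * f i (w i)) + rsum (fun i => cc i * nsq (vsub (w i) (x0 i)))
    <= Hval x0 w.
  rewrite -rsum_add; apply: rsum_le => i; exact: blk_lb.
have : 0 <= rsum (fun i => cc i * nsq (vsub (w i) (x0 i))).
  apply: rsum_ge0 => i; have := cc_pos i; have := nsq_ge0 (vsub (w i) (x0 i)); nra.
rewrite /Fval -rsum_scal; lra.
Qed.

Lemma bnsq_tri (a b c : bvec n) :
  bnsq (bsub a c) <= 2 * bnsq (bsub a b) + 2 * bnsq (bsub b c).
Proof.
rewrite /bnsq -!rsum_scal -rsum_add; apply: rsum_le => i.
rewrite /bsub /nsq /ip -!rsum_scal -rsum_add; apply: rsum_le => j.
rewrite /vsub; have h := Rle_0_sqr (a i j - 2 * b i j + c i j); rewrite /Rsqr in h; nra.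
Qed.

Lemma bnorm_sq (y : bvec n) : bnorm y * bnorm y = bnsq y.
Proof. rewrite /bnorm sqrt_sqrt //; exact: bnsq_ge0. Qed.

Variable x z : nat -> bvec n.
Variable I : nat -> {set 'I_N}.
Hypothesis hprop : proper_fun G.
Hypothesis hT : forall k, in_T gf gamma G (x k) (z k).
Hypothesis hupd : forall k i, x (S k) i = if i \in I (S k) then z k i else x k i.

Definition U k := FBE f gf gamma G (x k).

Definition dsum k := \big[Rplus/0]_(i < N | i \in I (S k))
         ((INR N - gamma i * L i) / INR N / (2 * gamma i)
          * nsq (vsub (z k i) (x k i))).

Lemma step k : U (S k) <= U k - dsum k.
Proof.
have [gz [Gz [Uk mink]]] := FBE_min _ _ (hT k).
have [gz' [Gz' [Uk1 mink1]]] := FBE_min _ _ (hT (S k)).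
have := mink1 (z k) gz Gz; rewrite /U Uk1 Uk.
suff : Hval (x (S k)) (z k) <= Hval (x k) (z k) - dsum k by lra.
have E : dsum k = rsum (fun i => if i \in I (S k) then cc i * nsq (vsub (z k i) (x k i)) else 0).
  by rewrite /dsum /rsum big_mkcond.
rewrite E /Hval -rsum_sub; apply: rsum_le => i.
case h: (i \in I (S k)).
- rewrite (blk_same (x (S k)) (z k) i); last by rewrite hupd h.
  have := blk_lb (x k) (z k) i; lra.
- rewrite /blk hupd h; lra.
Qed.

Lemma dsum_ge0 k : 0 <= dsum k.
Proof.
rewrite /dsum; apply: (big_rec (fun a => 0 <= a)); first lra.
move=> i a _ ha; have := cc_pos i; have := nsq_ge0 (vsub (z k i) (x k i)).
rewrite /cc => *; nra.
Qed.

Lemma Udec : Un_decreasing U.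
Proof. move=> k; have := step k; have := dsum_ge0 k; lra. Qed.

Lemma U_lb k : r0 + cm * bnsq (bsub (z k) (x k)) <= U k.
Proof.
have [gz [Gz [Uk _]]] := FBE_min _ _ (hT k); rewrite /U Uk; exact: HLB2 _ _ _ Gz.
Qed.

Lemma U_ge_r0 k : r0 <= U k.
Proof.
have := U_lb k; have [h _] := cm_facts; have := bnsq_ge0 (bsub (z k) (x k)); nra.
Qed.

Lemma U_le0 k : U k <= U 0.
Proof. apply: decreasing_prop; [exact: Udec | lia]. Qed.

Lemma lim_ge a l : Un_cv U l -> (forall k, a <= U k) -> a <= l.
Proof.
move=> hc ha; apply: Rnot_lt_le => hlt.
have [K hK] := hc (a - l) ltac:(lra).
have := hK K (le_n K); have := ha K; rewrite /Rdist => h1 h2.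
have := Rle_abs (U K - l); lra.
Qed.

Lemma lim_le l : Un_cv U l -> forall k, l <= U k.
Proof.
move=> hc k; apply: Rnot_lt_le => hlt.
have [K hK] := hc (l - U k) ltac:(lra).
have := hK (Nat.max K k) (Nat.le_max_l _ _).
have := decreasing_prop U k (Nat.max K k) Udec (Nat.le_max_r _ _).
rewrite /Rdist => h1 h2.
have := Rle_abs (- (U (Nat.max K k) - l)); rewrite Rabs_Ropp; lra.
Qed.

Definition bstep k := bnsq (bsub (x (S k)) (x k)).

Lemma bstep_le k : cm * bstep k <= U k - U (S k).
Proof.
have hs := step k.
suff : cm * bstep k <= dsum k by lra.
have E : bstep k = \big[Rplus/0]_(i < N | i \in I (S k)) nsq (vsub (z k i) (x k i)).
  rewrite /bstep /bnsq /rsum [RHS]big_mkcond /=; apply: eq_bigr => i _.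
  rewrite /bsub hupd; case: ifP => _ //; exact: nsq_vsub0.
rewrite E /dsum.
apply: (big_rec2 (fun a b => cm * a <= b)); first lra.
move=> i a b _ hab.
have [_ hc] := cm_facts; have := hc i; have := nsq_ge0 (vsub (z k i) (x k i)).
rewrite /cc => *; nra.
Qed.

Lemma iv : exists l, infinite_sum bstep l.
Proof.
have [hcm _] := cm_facts.
have hb : forall k, 0 <= bstep k by move=> k; exact: bnsq_ge0.
have hps : forall m, cm * sum_f_R0 bstep m <= U 0 - U (S m).
  elim=> [|m IH] /=; first exact: bstep_le.
  have := bstep_le (S m); lra.
have [l hl] : {l | Un_cv (sum_f_R0 bstep) l}; last by exists l.
apply: growing_cv.
- move=> m /=; have := hb (S m); lra.
- exists ((U 0 - r0) / cm) => y [m ->].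
  apply/(Rmult_le_reg_l cm) => //; rewrite /Rdiv; field_simplify; last lra.
  have := hps m; have := U_ge_r0 (S m); lra.
Qed.

Lemma FBE_glb xb : is_glb (fun v => exists w, fbe_obj f gf gamma G xb w = Some v)
   (FBE f gf gamma G xb).
Proof.
set S := fun v => exists w, fbe_obj f gf gamma G xb w = Some v.
suff [m hm] : exists m, is_glb S m by rewrite /FBE -/S (Rinf_glb _ _ hm).
set E := fun u => S (- u).
have hb : bound E.
  exists (- r0) => u [w hw]; rewrite fbe_H in hw.
  case eqw: (G w) hw => [gw|] hw; last by [].
  case: hw => hw.
  have := HLB2 xb w gw eqw; have [h _] := cm_facts; have := bnsq_ge0 (bsub w xb); nra.
have hne : exists u, E u.
  case: hprop => w0; case eq0: (G w0) => [g0|] // _.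
  exists (- (Hval xb w0 + g0)); exists w0; by rewrite Ropp_involutive fbe_H eq0.
have [m [hm1 hm2]] := completeness E hb hne.
exists (- m); split.
- move=> v hv; have : E (- v) by rewrite /E Ropp_involutive.
  move/hm1; lra.
- move=> b hb'; suff : m <= - b by lra.
  apply: hm2 => u hu; have := hb' _ hu; lra.
Qed.

Lemma FBE_le xb w gw : G w = Some gw -> FBE f gf gamma G xb <= Hval xb w + gw.
Proof. move=> hw; case: (FBE_glb xb) => h _; apply: h; exists w; by rewrite fbe_H hw. Qed.

Lemma FBE_approx xb eps : 0 < eps -> exists w gw, G w = Some gw /\
  Hval xb w + gw < FBE f gf gamma G xb + eps.
Proof.
move=> he; apply: NNPP => hno.
case: (FBE_glb xb) => _ h.
have : FBE f gf gamma G xb + eps <= FBE f gf gamma G xb; last lra.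
apply: h => v [w hw]; rewrite fbe_H in hw.
case eqw: (G w) hw => [gw|] hw; last by [].
case: hw => <-; apply: Rnot_lt_le => hlt; apply: hno; by exists w, gw.
Qed.

Lemma iii l xb : Un_cv U l -> cluster_point x xb -> FBE f gf gamma G xb = l.
Proof.
move=> hc hcl; set m := FBE f gf gamma G xb.
apply: Rle_antisym.
- apply: Rnot_lt_le => hlt.
  set eps := (m - l) / 3.
  have he : 0 < eps by rewrite /eps; lra.
  have [K hK] := hc eps he.
  have [hcm _] := cm_facts.
  set Rz := (U 0 - r0) / cm.
  have hRz : 0 <= Rz.
    rewrite /Rz /Rdiv; apply: Rmult_le_pos; first by have := U_ge_r0 0; lra.
    by left; apply: Rinv_0_lt_compat.
  have [d [hd hcont]] := Hval_cont xb (2 * Rz + 2) eps ltac:(lra) he.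
  have [k [hk hxk]] := hcl (Rmin d 1) K (Rmin_pos _ _ hd Rlt_0_1).
  have [gz [Gz [Uk _]]] := FBE_min _ _ (hT k).
  have h1 : bnsq (bsub (x k) xb) < 1.
    rewrite -bnorm_sq; have := Rmin_r d 1; have := sqrt_pos (bnsq (bsub (x k) xb)).
    rewrite /bnorm in hxk *; nra.
  have h2 : bnsq (bsub (z k) (x k)) <= Rz.
    rewrite /Rz; apply/(Rmult_le_reg_l cm) => //; rewrite /Rdiv; field_simplify; last lra.
    have := U_lb k; have := U_le0 k; lra.
  have h3 := bnsq_tri (z k) (x k) xb.
  have := hcont (x k) (z k) ltac:(have := Rmin_l d 1; lra) ltac:(lra).
  move/abs_bounds => h4.
  have := FBE_le xb (z k) gz Gz.
  have := hK k (elimT leP hk); rewrite /Rdist => h5.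
  have := Rle_abs (U k - l); rewrite /U Uk -/m in h5 *.
  have : 3 * eps = m - l by rewrite /eps; field.
  lra.
- apply: Rnot_lt_le => hlt.
  set eps := (l - m) / 2.
  have he : 0 < eps by rewrite /eps; lra.
  have [w [gw [hw hwv]]] := FBE_approx xb eps he.
  have [d [hd hcont]] := Hval_cont xb (bnsq (bsub w xb)) eps (bnsq_ge0 _) he.
  have [k [_ hxk]] := hcl d 0%nat hd.
  have [gz [Gz [Uk mink]]] := FBE_min _ _ (hT k).
  have := hcont (x k) w hxk (Rle_refl _); move/abs_bounds => h4.
  have := mink w gw hw.
  have := lim_le l hc k; rewrite /U Uk => h6.
  rewrite -/m in hwv.
  have : 2 * eps = l - m by rewrite /eps; field.
  lra.
Qed.

Lemma v_bounds : coercive (Phi f G) ->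
  (exists B, forall k, bnorm (x k) <= B) /\ (exists B, forall k, bnorm (z k) <= B).
Proof.
move=> hco; have [rr hrr] := hco (U 0).
have hz : forall k, bnorm (z k) <= rr.
  move=> k; apply: Rnot_lt_le => hlt; have := hrr _ hlt.
  have [gz [Gz [Uk _]]] := FBE_min _ _ (hT k).
  have hUk : U k = Hval (x k) (z k) + gz := Uk.
  rewrite /Phi Gz /= => h.
  have := FH (x k) (z k); have := U_le0 k; lra.
split.
- exists (sqrt (rsum (fun i => nsq (x 0%nat i) + rr * rr))).
  have hx : forall k i, nsq (x k i) <= nsq (x 0%nat i) + rr * rr.
    elim=> [|k IH] i; first by have := Rle_0_sqr rr; rewrite /Rsqr; lra.
    rewrite hupd; case: ifP => _; last exact: IH.
    have := nsq_le_bnsq (z k) i; have := bnorm_sq (z k); have := hz k.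
    have := sqrt_pos (bnsq (z k)); have := nsq_ge0 (x 0%nat i).
    rewrite /bnorm => *; nra.
  move=> k; apply: sqrt_le_1_alt; apply: rsum_le => i; exact: hx.
- by exists rr.
Qed.

Lemma main_sec :
  (forall i, 0 < (INR N - gamma i * L i) / INR N) /\
  (forall k, FBE f gf gamma G (x (S k)) <=
     FBE f gf gamma G (x k)
     - \big[Rplus/0]_(i < N | i \in I (S k))
         ((INR N - gamma i * L i) / INR N / (2 * gamma i)
          * nsq (vsub (z k i) (x k i)))) /\
  (forall k, FBE f gf gamma G (x (S k)) <= FBE f gf gamma G (x k)) /\
  (exists Phistar,
     Un_cv (fun k => FBE f gf gamma G (x k)) Phistar /\
     (forall xs r, (forall y, ext_le (Phi f G xs) (Phi f G y)) ->
        Phi f G xs = Some r -> r <= Phistar) /\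
     (forall xb, cluster_point x xb -> FBE f gf gamma G xb = Phistar)) /\
  (exists l, infinite_sum (fun k => bnsq (bsub (x (S k)) (x k))) l) /\
  (coercive (Phi f G) ->
     (exists B, forall k, bnorm (x k) <= B) /\
     (exists B, forall k, bnorm (z k) <= B)).
Proof.
split.
  move=> i; have := cc_pos i; rewrite /cc; have [g1 _] := hgam i.
  move=> h; have := Rmult_lt_0_compat _ _ h (ltac:(lra) : 0 < 2 * gamma i).
  by rewrite /Rdiv Rmult_assoc Rinv_l; lra.
split; first exact: step.
split; first exact: Udec.
split.
  have [l hl] : {l | Un_cv U l}.
    apply: decreasing_cv; first exact: Udec.
    exists (- r0) => y [k ->]; rewrite /opp_seq; have := U_ge_r0 k; lra.
    exists l; split; first exact: hl.
    split; last by move=> xb hxb; exact: iii.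
    move=> xs' r hm' hr; apply: (lim_ge r l hl) => k.
    have [gz [Gz [Uk _]]] := FBE_min _ _ (hT k).
    have hUk : U k = Hval (x k) (z k) + gz := Uk.
    have := hm' (z k); rewrite hr /Phi Gz /= => h.
    have := FH (x k) (z k); lra.
split; first exact: iv.
exact: v_bounds.
Qed.

End Blocks.

Theorem lemma2p5 (N : nat) (n : 'I_N -> nat)
  (f : forall i, vec (n i) -> R) (gf : forall i, vec (n i) -> vec (n i))
  (L gamma : 'I_N -> R) (G : bvec n -> option R)
  (x z : nat -> bvec n) (I : nat -> {set 'I_N}) :
  (1 <= N)%nat ->
  (forall i, is_gradient (f i) (gf i)) ->
  (forall i, 0 < L i) ->
  (forall i, lipschitz (gf i) (L i)) ->
  proper_fun G -> lsc G ->
  (exists xs, Phi f G xs <> None /\ forall y, ext_le (Phi f G xs) (Phi f G y)) ->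
  (forall i, 0 < gamma i /\ gamma i < INR N / L i) ->
  (forall k, in_T gf gamma G (x k) (z k)) ->
  (forall k i, x (S k) i = if i \in I (S k) then z k i else x k i) ->
  (* (i) *)
  (forall i, 0 < (INR N - gamma i * L i) / INR N) /\
  (forall k, FBE f gf gamma G (x (S k)) <=
     FBE f gf gamma G (x k)
     - \big[Rplus/0]_(i < N | i \in I (S k))
         ((INR N - gamma i * L i) / INR N / (2 * gamma i)
          * nsq (vsub (z k i) (x k i)))) /\
  (* (ii) *)
  (forall k, FBE f gf gamma G (x (S k)) <= FBE f gf gamma G (x k)) /\
  (exists Phistar,
     Un_cv (fun k => FBE f gf gamma G (x k)) Phistar /\
     (forall xs r, (forall y, ext_le (Phi f G xs) (Phi f G y)) ->
        Phi f G xs = Some r -> r <= Phistar) /\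
  (* (iii) *)
     (forall xb, cluster_point x xb -> FBE f gf gamma G xb = Phistar)) /\
  (* (iv) *)
  (exists l, infinite_sum (fun k => bnsq (bsub (x (S k)) (x k))) l) /\
  (* (v) *)
  (coercive (Phi f G) ->
     (exists B, forall k, bnorm (x k) <= B) /\
     (exists B, forall k, bnorm (z k) <= B)).
Proof.
move=> hN hgrad hL hlip hprop _ [xs [hne hmin]] hgam hT hupd.
case eq: (Phi f G xs) hne => [r0|] // _.
exact: (@main_sec N n f gf L gamma G hN hgrad hL hlip hgam xs r0 eq hmin x z I hprop hT hupd).
Qed.
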